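(* Let $Q:(-\infty,-1)\to(-\infty,0)$ be the inverse of the strictly increasing function $G\mapsto G-e^G$ on $(-\infty,0)$, and define $R:\mathbb{R}\to\mathbb{R}$ by $R(V)=-2(1-e^{Q(V)})^2$ for $V<-1$ and $R(V)=4(V+1)$ for $V\ge -1$. Fix $m<-1$. For $n\in\mathbb{R}$ let $V(t;n)$ denote the unique solution of $V''+3V'=R(V)$, $t>0$, $V(0)=m$, $V'(0)=n$ (prime denoting $d/dt$, $V_t=dV/dt$). Define $\beta^0=\{n\in\mathbb{R}: V_t(t;n)>0 \text{ and } V(t;n)\le -1 \text{ for all } t>0\}$. Then $\beta^0$ is a nonempty closed set. Moreover, if $n\in\beta^0$, then $V(t;n)<-1$ for all $t>0$. *)

(* Defs.v *)
From Stdlib Require Import Reals ClassicalEpsilon.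
From Coquelicot Require Import Coquelicot.
Open Scope R_scope.

(* Q : (-oo,-1) -> (-oo,0), inverse of G |-> G - exp G on (-oo,0).
   Defined by choice; for v < -1 the defining property has a unique witness. *)
Definition Q (v : R) : R :=
  epsilon (inhabits 0) (fun G => G < 0 /\ G - exp G = v).

Definition Rf (v : R) : R :=
  if Rlt_dec v (-1) then -2 * (1 - exp (Q v)) ^ 2 else 4 * (v + 1).

(* f solves V'' + 3 V' = R(V) for t > 0 with V(0) = m, V'(0) = n.
   (f is required differentiable on all of R; since R is globally Lipschitz
   the solution on [0,oo) extends uniquely to R, so this is harmless.) *)
Definition is_solution (m n : R) (f : R -> R) : Prop :=
  (forall t, ex_derive f t) /\
  (forall t, 0 < t -> is_derive (Derive f) t (Rf (f t) - 3 * Derive f t)) /\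
  f 0 = m /\ Derive f 0 = n.

Definition beta0 (V : R -> R -> R) : R -> Prop :=
  fun n => forall t, 0 < t -> Derive (V n) t > 0 /\ V n t <= -1.

(* Main.v *)
Require Import Defs.
From Stdlib Require Import Reals ClassicalEpsilon Lra Psatz.
From Coquelicot Require Import Coquelicot.
Open Scope R_scope.

Lemma Q_spec v : v < -1 -> Q v < 0 /\ Q v - exp (Q v) = v.
Proof.
  intro hv. unfold Q. apply epsilon_spec.
  destruct (IVT (fun G => G - exp G - v) v 0) as [z [hz1 hz2]].
  - intro x. apply derivable_continuous_pt. reg.
  - lra.
  - simpl. pose proof (exp_pos v). lra.
  - rewrite exp_0. lra.
  - exists z. simpl in hz2. split; [|lra].
    destruct (Req_dec z 0) as [->|]; [rewrite exp_0 in hz2; lra | lra].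
Qed.

Lemma mvt f f' a b : a < b -> (forall c, a <= c <= b -> is_derive f c (f' c)) ->
  exists c, a < c < b /\ f b - f a = f' c * (b - a).
Proof.
  intros hab hd. destruct (MVT_cor2 f f' a b hab) as [c [h1 h2]].
  - intros c hc. apply is_derive_Reals. auto.
  - exists c; auto.
Qed.

Lemma mono_deriv f f' a b : a <= b -> (forall c, a <= c <= b -> is_derive f c (f' c)) ->
  (forall c, a < c < b -> 0 <= f' c) -> f a <= f b.
Proof.
  intros hab hd hp. destruct (Req_dec a b) as [->|hne]; [lra|].
  destruct (mvt f f' a b) as [c [hc e]]; try lra; auto.
  specialize (hp c hc). nra.
Qed.

Lemma phi_deriv x : is_derive (fun G => 4*(G - exp G) + 2*(1 - exp G)^2) x (4*(1-exp x)^2).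
Proof. auto_derive; auto. ring. Qed.

Lemma psi_deriv x : is_derive (fun G => -2*(1 - exp G)^2) x (4*(1-exp x)*exp x).
Proof. auto_derive; auto. ring. Qed.

Lemma ge_strict x y : x < y -> y <= 0 -> x - exp x < y - exp y.
Proof.
  intros hxy hy.
  destruct (mvt exp exp x y hxy) as [c [hc e]].
  - intros c _. apply is_derive_Reals. apply derivable_pt_lim_exp.
  - assert (exp c < 1). { rewrite <- exp_0. apply exp_increasing. lra. }
    nra.
Qed.

Lemma Rabs_le_inv x a : Rabs x <= a -> -a <= x <= a.
Proof. unfold Rabs; destruct (Rcase_abs x); lra. Qed.
Lemma Rabs_lt_inv x a : Rabs x < a -> -a < x < a.
Proof. unfold Rabs; destruct (Rcase_abs x); lra. Qed.
Definition phi G := 4*(G - exp G) + 2*(1 - exp G)^2.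
Definition psi G := -2*(1 - exp G)^2.

Lemma phi_mono x y : x <= y -> phi x <= phi y.
Proof.
  intro h. apply (mono_deriv phi (fun x => 4*(1-exp x)^2)); auto.
  - intros; apply phi_deriv.
  - intros c _; cbv beta. apply Rmult_le_pos; [lra|apply pow2_ge_0].
Qed.

Lemma psi_mono x y : x <= y -> y <= 0 -> psi x <= psi y.
Proof.
  intros h h0. apply (mono_deriv psi (fun x => 4*(1-exp x)*exp x)); auto.
  - intros; apply psi_deriv.
  - intros c hc. cbv beta. assert (exp c < 1) by (rewrite <- exp_0; apply exp_increasing; lra).
    pose proof (exp_pos c). nra.
Qed.

Lemma Rf_lt v : v < -1 -> Rf v = psi (Q v).
Proof. intro h. unfold Rf. destruct (Rlt_dec v (-1)); [reflexivity|lra]. Qed.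
Lemma Rf_ge v : -1 <= v -> Rf v = 4*(v+1).
Proof. intro h. unfold Rf. destruct (Rlt_dec v (-1)); [lra|reflexivity]. Qed.

Lemma Rf_lower_lin v : v < -1 -> 4*(v+1) <= Rf v /\ Rf v < 0 /\ -2 <= Rf v.
Proof.
  intro h. rewrite Rf_lt by auto. destruct (Q_spec v h) as [hq e].
  assert (phi (Q v) <= phi 0) by (apply phi_mono; lra).
  unfold phi, psi in *. rewrite exp_0 in H.
  assert (exp (Q v) < 1) by (rewrite <- exp_0; apply exp_increasing; lra).
  pose proof (exp_pos (Q v)). nra.
Qed.

Lemma Rf_mono a b : b <= a -> 0 <= Rf a - Rf b <= 4*(a-b).
Proof.
  intro h. destruct (Rlt_dec a (-1)) as [ha|ha].
  - assert (hb : b < -1) by lra.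
    rewrite (Rf_lt a ha), (Rf_lt b hb).
    destruct (Q_spec a ha) as [qa ea]. destruct (Q_spec b hb) as [qb eb].
    assert (Q b <= Q a).
    { destruct (Rle_dec (Q b) (Q a)); auto. pose proof (ge_strict (Q a) (Q b)). lra. }
    pose proof (psi_mono _ _ H ltac:(lra)). pose proof (phi_mono _ _ H).
    unfold phi, psi in *. split; nra.
  - rewrite (Rf_ge a) by lra. destruct (Rlt_dec b (-1)) as [hb|hb].
    + pose proof (Rf_lower_lin b hb). lra.
    + rewrite (Rf_ge b) by lra. lra.
Qed.

Lemma Rf_lip a b : Rabs (Rf a - Rf b) <= 4 * Rabs (a - b).
Proof.
  destruct (Rle_dec b a).
  - pose proof (Rf_mono a b r). rewrite !Rabs_pos_eq; lra.
  - pose proof (Rf_mono b a ltac:(lra)). rewrite (Rabs_left1 (a-b)) by lra.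
    rewrite Rabs_left1 by lra. lra.
Qed.

Lemma Rf_bounds v : -2 <= Rf v /\ (v < -1 -> Rf v < 0) /\ (-1 < v -> 0 < Rf v) /\ (v <= -1 -> Rf v <= 0).
Proof.
  destruct (Rlt_dec v (-1)) as [h|h].
  - pose proof (Rf_lower_lin v h). repeat split; intros; lra.
  - rewrite Rf_ge by lra. repeat split; intros; lra.
Qed.
Lemma cont_eps f x : ex_derive f x -> forall eps, 0 < eps ->
  exists d, 0 < d /\ forall y, Rabs (y - x) < d -> Rabs (f y - f x) < eps.
Proof.
  intros hd eps he. pose proof (ex_derive_continuous f x hd) as hc.
  destruct (hc (fun z => Rabs (z - f x) < eps)) as [d hd'].
  { exists (mkposreal eps he). intros y hy. exact hy. }
  exists d. split; [apply cond_pos|]. intros y hy. apply (hd' y). exact hy.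
Qed.

Lemma deriv_pos g x l : is_derive g x l -> 0 < l ->
  exists d, 0 < d /\ forall h, 0 < h < d -> g x < g (x+h) /\ g (x-h) < g x.
Proof.
  intros hd hl. apply is_derive_Reals in hd.
  destruct (hd l hl) as [d hd']. exists d. split; [apply cond_pos|].
  intros h hh. split.
  - assert (hne : h <> 0) by lra. assert (Rabs h < d) by (rewrite Rabs_pos_eq; lra).
    specialize (hd' h hne H). apply Rabs_def2 in hd'. destruct hd' as [_ h2].
    assert (0 < (g (x+h) - g x)/h) by lra.
    assert (0 < (g (x+h) - g x)/h * h) by (apply Rmult_lt_0_compat; lra).
    assert ((g (x+h) - g x)/h * h = (g(x+h) - g x)) by (field; lra). lra.
  - assert (hne : -h <> 0) by lra. assert (Rabs (-h) < d) by (rewrite Rabs_Ropp, Rabs_pos_eq; lra).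
    specialize (hd' (-h) hne H). apply Rabs_def2 in hd'. destruct hd' as [_ h2].
    assert (0 < (g (x+-h) - g x)/(-h)) by lra.
    assert (0 < (g (x+-h) - g x)/(-h) * h) by (apply Rmult_lt_0_compat; lra).
    replace (x - h) with (x + - h) by ring.
    assert ((g (x+-h) - g x)/(-h) * h = -(g(x+-h) - g x)) by (field; lra). lra.
Qed.

Definition conte (f : R -> R) := forall x eps, 0 < eps ->
  exists d, 0 < d /\ forall y, Rabs (y - x) < d -> Rabs (f y - f x) < eps.

Lemma first_hit f a b c : conte f -> a < b -> f a < c -> c <= f b ->
  exists tau, a < tau <= b /\ c <= f tau /\ forall s, a <= s < tau -> f s < c.
Proof.
  intros hf hab ha hb.
  set (E := fun x => a <= x <= b /\ forall s, a <= s <= x -> f s < c).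
  destruct (completeness E) as [tau [hub hl]].
  { exists b. intros x [hx _]. lra. }
  { exists a. split; [lra|]. intros s hs. replace s with a by lra. auto. }
  assert (hEa : E a). { split; [lra|]. intros s hs. replace s with a by lra. auto. }
  assert (hat : a <= tau) by (apply hub; auto).
  assert (htb : tau <= b) by (apply hl; intros x [hx _]; lra).
  assert (below : forall s, a <= s < tau -> f s < c).
  { intros s hs. destruct (classic (exists x, E x /\ s < x)) as [[x [[_ hx] hsx]]|hn].
    - apply hx; lra.
    - exfalso. assert (tau <= s).
      { apply hl. intros x hx. destruct (Rle_dec x s); auto. exfalso; apply hn; exists x; split; auto; lra. }
      lra. }
  assert (hge : c <= f tau).
  { destruct (Rle_dec c (f tau)) as [|hn]; auto. exfalso.
    destruct (hf tau (c - f tau) ltac:(lra)) as [d [hd hd']].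
    destruct (Req_dec tau b) as [e|ne]; [subst; lra|].
    set (x := Rmin (tau + d/2) b).
    assert (E x).
    { split. { unfold x. split; [apply Rmin_case; lra|apply Rmin_r]. }
      intros s hs. destruct (Rlt_dec s tau). { apply below; lra. }
      assert (s <= tau + d/2) by (pose proof (Rmin_l (tau + d/2) b); fold x in H; lra).
      assert (Rabs (s - tau) < d) by (rewrite Rabs_pos_eq; lra).
      specialize (hd' s H0). apply Rabs_def2 in hd'. lra. }
    assert (x <= tau) by (apply hub; auto).
    unfold x in H0. revert H0. apply Rmin_case; lra. }
  exists tau. split; [|split; auto].
  split; auto. destruct (Req_dec a tau) as [e|]; [subst; lra|lra].
Qed.

Lemma last_cross f a b c : conte f -> a < b -> f a <= c -> c < f b ->
  exists tau, a <= tau < b /\ f tau <= c /\ forall s, tau < s <= b -> c < f s.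
Proof.
  intros hf hab ha hb.
  set (g := fun x => - f (a + b - x)).
  assert (hg : conte g).
  { intros x eps he. destruct (hf (a+b-x) eps he) as [d [hd hd']]. exists d; split; auto.
    intros y hy. unfold g. replace (- f (a + b - y) - - f (a + b - x)) with (- (f (a+b-y) - f (a+b-x))) by ring.
    rewrite Rabs_Ropp. apply hd'. replace (a + b - y - (a + b - x)) with (-(y-x)) by ring.
    rewrite Rabs_Ropp; auto. }
  destruct (first_hit g a b (-c) hg hab) as [t [ht [h1 h2]]].
  - unfold g. replace (a+b-a) with b by ring. lra.
  - unfold g. replace (a+b-b) with a by ring. lra.
  - exists (a+b-t). split; [lra|]. split.
    + unfold g in h1. lra.
    + intros s hs. specialize (h2 (a+b-s) ltac:(lra)). unfold g in h2.
      replace (a+b-(a+b-s)) with s in h2 by ring. lra.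
Qed.
Lemma hderiv (f : R -> R) c t g : is_derive (Derive f) t g ->
  is_derive (fun s => (Derive f s + c) * exp (3*s)) t ((g + 3*(Derive f t + c))*exp(3*t)).
Proof.
  intro hd. auto_derive. { exists g; auto. }
  change (fun x => Derive f x) with (Derive f). rewrite (is_derive_unique _ _ _ hd). ring.
Qed.
Lemma Ederiv (f1 f2 : R -> R) k t g1 g2 : ex_derive f1 t -> ex_derive f2 t ->
  is_derive (Derive f1) t g1 -> is_derive (Derive f2) t g2 ->
  is_derive (fun s => ((f1 s - f2 s)^2 + (Derive f1 s - Derive f2 s)^2) * exp (k*s)) t
   ((2*(f1 t - f2 t)*(Derive f1 t - Derive f2 t) + 2*(Derive f1 t - Derive f2 t)*(g1 - g2)
     + k*((f1 t - f2 t)^2 + (Derive f1 t - Derive f2 t)^2)) * exp (k*t)).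
Proof.
  intros e1 e2 h1 h2. auto_derive.
  { repeat split; auto; [exists g1|exists g2]; auto. }
  change (fun x => Derive f1 x) with (Derive f1). change (fun x => Derive f2 x) with (Derive f2). rewrite (is_derive_unique _ _ _ h1), (is_derive_unique _ _ _ h2). change (fun x => f1 x) with f1. change (fun x => f2 x) with f2. ring.
Qed.

Definition odesol (f : R -> R) := (forall t, ex_derive f t) /\
  (forall t, 0 < t -> is_derive (Derive f) t (Rf (f t) - 3 * Derive f t)).

Lemma sol_ode m n f : is_solution m n f -> odesol f.
Proof. intros [h1 [h2 _]]. split; auto. Qed.

Lemma const_ode : odesol (fun _ => -1).
Proof.
  split. { intro; apply ex_derive_const. }
  intros t _. rewrite Derive_const. rewrite Rf_ge by lra.
  replace (4 * (-1 + 1) - 3 * 0) with 0 by ring.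
  apply (is_derive_ext (fun _ => 0)). { intro; rewrite Derive_const; auto. }
  auto_derive; auto.
Qed.

Definition En (f1 f2 : R -> R) s := (f1 s - f2 s)^2 + (Derive f1 s - Derive f2 s)^2.

Lemma En_bound (x y r : R) : r^2 <= 16 * x^2 ->
  Rabs (2*x*y + 2*y*(r - 3*y)) <= 20 * (x^2 + y^2).
Proof. intro h. apply Rabs_le. pose proof (pow2_ge_0 (x-y)). pose proof (pow2_ge_0 (x+y)). pose proof (pow2_ge_0 (y-r)). pose proof (pow2_ge_0 (y+r)). split; nra. Qed.

Lemma r_bound f1 f2 s : (Rf (f1 s) - 3 * Derive f1 s - (Rf (f2 s) - 3 * Derive f2 s))
  = (Rf (f1 s) - Rf (f2 s)) - 3 * (Derive f1 s - Derive f2 s) /\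
  (Rf (f1 s) - Rf (f2 s))^2 <= 16 * (f1 s - f2 s)^2.
Proof.
  split; [ring|]. pose proof (Rf_lip (f1 s) (f2 s)).
  pose proof (Rabs_pos (Rf (f1 s) - Rf (f2 s))).
  rewrite <- (pow2_abs (Rf (f1 s) - Rf (f2 s))), <- (pow2_abs (f1 s - f2 s)). nra.
Qed.

Lemma gronwall f1 f2 s t : odesol f1 -> odesol f2 -> 0 < s <= t ->
  En f1 f2 t <= En f1 f2 s * exp (20*(t-s)) /\ En f1 f2 s <= En f1 f2 t * exp (20*(t-s)).
Proof.
  intros [e1 d1] [e2 d2] hst.
  assert (key : forall k c, 0 < c -> is_derive (fun u => En f1 f2 u * exp (k*u)) c
     ((2*(f1 c - f2 c)*(Derive f1 c - Derive f2 c) + 2*(Derive f1 c - Derive f2 c)*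
       ((Rf (f1 c) - Rf (f2 c)) - 3 * (Derive f1 c - Derive f2 c))
     + k*En f1 f2 c) * exp (k*c))).
  { intros k c hc. destruct (r_bound f1 f2 c) as [eq _]. rewrite <- eq.
    apply Ederiv; auto. }
  assert (bnd : forall c, Rabs (2*(f1 c - f2 c)*(Derive f1 c - Derive f2 c) + 2*(Derive f1 c - Derive f2 c)*
       ((Rf (f1 c) - Rf (f2 c)) - 3 * (Derive f1 c - Derive f2 c))) <= 20 * En f1 f2 c).
  { intro c. apply En_bound. apply r_bound. }
  split.
  - assert (En f1 f2 t * exp (-20*t) <= En f1 f2 s * exp (-20*s)).
    { assert (-(En f1 f2 s * exp (-20*s)) <= -(En f1 f2 t * exp (-20*t))); [|lra].
      apply (mono_deriv (fun u => -(En f1 f2 u * exp (-20*u))) (fun c => -((2*(f1 c - f2 c)*(Derive f1 c - Derive f2 c) + 2*(Derive f1 c - Derive f2 c)*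
       ((Rf (f1 c) - Rf (f2 c)) - 3 * (Derive f1 c - Derive f2 c))
     + -20*En f1 f2 c) * exp (-20*c)))); try lra.
      - intros c hc. apply (is_derive_opp (fun u => En f1 f2 u * exp (-20*u))). apply key; lra.
      - intros c hc. cbv beta. specialize (bnd c). apply Rabs_le_inv in bnd.
        pose proof (exp_pos (-20*c)). nra. }
    assert (exp (20*(t-s)) = exp (-20*s) * exp (20*t)) by (rewrite <- exp_plus; f_equal; ring).
    assert (exp (-20*t) * exp (20*t) = 1) by (rewrite <- exp_plus, <- exp_0; f_equal; ring).
    pose proof (exp_pos (20*t)). rewrite H0.
    assert (En f1 f2 t * exp (-20*t) * exp (20*t) <= En f1 f2 s * exp (-20*s) * exp (20*t)) by (apply Rmult_le_compat_r; lra).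
    rewrite Rmult_assoc, H1 in H3. lra.
  - assert (En f1 f2 s * exp (20*s) <= En f1 f2 t * exp (20*t)).
    { apply (mono_deriv (fun u => (En f1 f2 u * exp (20*u))) (fun c => ((2*(f1 c - f2 c)*(Derive f1 c - Derive f2 c) + 2*(Derive f1 c - Derive f2 c)*
       ((Rf (f1 c) - Rf (f2 c)) - 3 * (Derive f1 c - Derive f2 c))
     + 20*En f1 f2 c) * exp (20*c)))); try lra.
      - intros c hc. apply key; lra.
      - intros c hc. cbv beta. specialize (bnd c). apply Rabs_le_inv in bnd.
        pose proof (exp_pos (20*c)). nra. }
    assert (exp (20*(t-s)) = exp (-20*s) * exp (20*t)) by (rewrite <- exp_plus; f_equal; ring).
    assert (exp (-20*s) * exp (20*s) = 1) by (rewrite <- exp_plus, <- exp_0; f_equal; ring).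
    pose proof (exp_pos (-20*s)). rewrite H0.
    assert (En f1 f2 s * exp (20*s) * exp (-20*s) <= En f1 f2 t * exp (20*t) * exp (-20*s)) by (apply Rmult_le_compat_r; lra).
    rewrite Rmult_assoc, (Rmult_comm (exp (20*s))), H1 in H3. lra.
Qed.

Lemma exp3c c : c <= 1 -> 0 < exp (3*c) <= exp 3.
Proof.
  intro h. split; [apply exp_pos|]. destruct (Req_dec c 1) as [->|].
  - rewrite Rmult_1_r; lra.
  - left; apply exp_increasing; lra.
Qed.

Lemma D0 m n f : m < -1 -> is_solution m n f -> forall eps, 0 < eps ->
  exists d, 0 < d /\ forall u, 0 < u < d -> Rabs (Derive f u - n) < eps.
Proof.
  intros hm [hex [hder [h0 hn]]].
  destruct (cont_eps f 0 (hex 0) (-1-m) ltac:(lra)) as [d0 [hd0 hc0]].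
  assert (hneg : forall u, 0 <= u < d0 -> f u < -1).
  { intros u hu. assert (Rabs (u - 0) < d0) by (rewrite Rminus_0_r, Rabs_pos_eq; lra).
    specialize (hc0 u H). apply Rabs_lt_inv in hc0. lra. }
  set (u0 := Rmin d0 1 / 2).
  assert (hu0 : 0 < u0 /\ u0 < d0 /\ u0 <= 1/2).
  { unfold u0. pose proof (Rmin_l d0 1). pose proof (Rmin_r d0 1).
    split; [apply Rmin_case; lra|]. lra. }
  set (h := fun s => (Derive f s + 0) * exp (3*s)).
  set (K := 2 * exp 3).
  assert (hmono : forall s t, 0 < s < t -> t <= u0 -> h t <= h s /\ h s - h t <= K*(t-s)).
  { intros s t hs ht.
    destruct (mvt h (fun c => (Rf (f c) - 3 * Derive f c + 3*(Derive f c + 0))*exp(3*c)) s t) as [c [hc e]].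
    { lra. }
    { intros c hc. apply hderiv. apply hder. lra. }
    pose proof (Rf_bounds (f c)) as [b1 [b2 _]]. specialize (b2 (hneg c ltac:(lra))).
    pose proof (exp3c c ltac:(lra)).
    replace (Rf (f c) - 3 * Derive f c + 3 * (Derive f c + 0)) with (Rf (f c)) in e by ring.
    assert (-2 * exp 3 <= Rf (f c) * exp (3*c) <= 0) by nra.
    unfold K. split; nra. }
  assert (hDh : forall s, Derive f s = h s * exp (-3*s)).
  { intro s. unfold h. rewrite Rplus_0_r, Rmult_assoc, <- exp_plus.
    replace (3*s + -3*s) with 0 by ring. rewrite exp_0; ring. }
  set (B := Rabs (h u0) + K).
  assert (hB : forall s, 0 < s <= u0 -> Rabs (Derive f s) <= B).
  { intros s hs. assert (Rabs (h s) <= B).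
    { destruct (Req_dec s u0) as [->|]. { unfold B, K. pose proof (exp_pos 3); lra. }
      destruct (hmono s u0) as [a1 a2]; try lra.
      pose proof (Rabs_le_inv (h u0) _ (Rle_refl _)).
      assert (K*(u0-s) <= K) by (unfold K; pose proof (exp_pos 3); nra).
      assert (0 <= K) by (unfold K; pose proof (exp_pos 3); lra).
      apply Rabs_le. unfold B. lra. }
    rewrite hDh, Rabs_mult, (Rabs_pos_eq (exp _)) by (left; apply exp_pos).
    assert (exp (-3*s) <= 1) by (rewrite <- exp_0; left; apply exp_increasing; lra).
    pose proof (Rabs_pos (h s)). pose proof (exp_pos (-3*s)). nra. }
  set (L := 2 + 3 * B).
  assert (hL : 0 <= L) by (unfold L, B, K; pose proof (Rabs_pos (h u0)); pose proof (exp_pos 3); lra).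
  assert (hlip : forall s t, 0 < s <= t -> t <= u0 -> Rabs (Derive f t - Derive f s) <= L*(t-s)).
  { intros s t hs ht. destruct (Req_dec s t) as [->|hne].
    { rewrite Rminus_diag, Rabs_R0. lra. }
    destruct (mvt (Derive f) (fun c => Rf (f c) - 3 * Derive f c) s t) as [c [hc e]].
    { lra. } { intros c hc. apply hder. lra. }
    rewrite e, Rabs_mult, (Rabs_pos_eq (t - s)) by lra.
    apply Rmult_le_compat_r; [lra|].
    pose proof (Rf_bounds (f c)) as [b1 [b2 _]]. specialize (b2 (hneg c ltac:(lra))).
    pose proof (hB c ltac:(lra)) as hb. apply Rabs_le_inv in hb.
    apply Rabs_le. unfold L. lra. }
  assert (hd0' : derivable_pt_lim f 0 n).
  { apply is_derive_Reals. rewrite <- hn. apply Derive_correct. auto. }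
  assert (hu : forall u, 0 < u <= u0 -> Rabs (Derive f u - n) <= L * u).
  { intros u hu. apply Rle_plus_epsilon. intros eps he.
    destruct (hd0' eps he) as [eta heta].
    set (s := Rmin eta u / 2).
    assert (hs : 0 < s < u /\ s < eta).
    { unfold s. pose proof (Rmin_l eta u). pose proof (Rmin_r eta u). pose proof (cond_pos eta).
      split; [split; [apply Rmin_case|]|]; lra. }
    assert (Rabs s < eta) by (rewrite Rabs_pos_eq; lra).
    specialize (heta s ltac:(lra) H).
    destruct (mvt f (Derive f) 0 s) as [c [hc e]]. { lra. }
    { intros c _. apply Derive_correct. auto. }
    replace ((f (0 + s) - f 0) / s) with (Derive f c) in heta.
    2:{ rewrite Rplus_0_l, e. field. lra. }
    pose proof (hlip c u ltac:(lra) ltac:(lra)).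
    apply Rabs_le_inv in H0. apply Rabs_lt_inv in heta.
    apply Rabs_le. nra. }
  intros eps he. exists (Rmin u0 (eps / (L+1))). split.
  { apply Rmin_case; [lra|]. apply Rdiv_lt_0_compat; lra. }
  intros u hu'. pose proof (Rmin_l u0 (eps/(L+1))). pose proof (Rmin_r u0 (eps/(L+1))).
  pose proof (hu u ltac:(lra)).
  assert ((L+1) * u < eps).
  { replace eps with ((L+1) * (eps/(L+1))) by (field; lra). apply Rmult_lt_compat_l; lra. }
  nra.
Qed.

Lemma ex_conte f : (forall t, ex_derive f t) -> conte f.
Proof. intros h x eps he. apply cont_eps; auto. Qed.

Lemma sq_close x y dd a : 0 < a <= 1 -> Rabs x < a -> Rabs (y - dd) < a ->
  x^2 + y^2 <= dd^2 + a * (2 * Rabs dd + 2).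
Proof.
  intros ha hx hy. apply Rabs_lt_inv in hx. apply Rabs_lt_inv in hy.
  unfold Rabs; destruct (Rcase_abs dd); nra.
Qed.

Lemma grow0 m n1 n2 f1 f2 t : m < -1 -> is_solution m n1 f1 -> is_solution m n2 f2 -> 0 < t ->
  En f1 f2 t <= (n1 - n2)^2 * exp (20*t).
Proof.
  intros hm s1 s2 ht. pose proof (sol_ode _ _ _ s1) as o1. pose proof (sol_ode _ _ _ s2) as o2.
  pose proof s1 as [e1 [_ [z1 _]]]. pose proof s2 as [e2 [_ [z2 _]]].
  apply Rle_plus_epsilon. intros eps he.
  set (E := exp (20*t)). assert (hE : 0 < E) by apply exp_pos.
  set (a := Rmin 1 (eps / E / (2 * Rabs (n1 - n2) + 2))).
  assert (ha : 0 < a <= 1).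
  { unfold a. pose proof (Rabs_pos (n1-n2)). split; [apply Rmin_case; [lra|]|apply Rmin_l].
    apply Rdiv_lt_0_compat; [apply Rdiv_lt_0_compat|]; lra. }
  assert (ha2 : a * (2 * Rabs (n1 - n2) + 2) <= eps / E).
  { pose proof (Rabs_pos (n1-n2)). unfold a.
    pose proof (Rmin_r 1 (eps / E / (2 * Rabs (n1 - n2) + 2))).
    apply Rmult_le_compat_r with (r := 2 * Rabs (n1 - n2) + 2) in H0; [|lra].
    replace (eps / E / (2 * Rabs (n1 - n2) + 2) * (2 * Rabs (n1 - n2) + 2)) with (eps/E) in H0 by (field; lra).
    lra. }
  destruct (cont_eps f1 0 (e1 0) (a/2) ltac:(lra)) as [c1 [hc1 hc1']].
  destruct (cont_eps f2 0 (e2 0) (a/2) ltac:(lra)) as [c2 [hc2 hc2']].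
  destruct (D0 m n1 f1 hm s1 (a/2) ltac:(lra)) as [d1 [hd1 hd1']].
  destruct (D0 m n2 f2 hm s2 (a/2) ltac:(lra)) as [d2 [hd2 hd2']].
  set (s := Rmin (Rmin c1 c2) (Rmin (Rmin d1 d2) t) / 2).
  assert (hs : 0 < s /\ s < c1 /\ s < c2 /\ s < d1 /\ s < d2 /\ s < t).
  { unfold s. pose proof (Rmin_l c1 c2). pose proof (Rmin_r c1 c2). pose proof (Rmin_l d1 d2).
    pose proof (Rmin_r d1 d2). pose proof (Rmin_l (Rmin d1 d2) t). pose proof (Rmin_r (Rmin d1 d2) t).
    pose proof (Rmin_l (Rmin c1 c2) (Rmin (Rmin d1 d2) t)). pose proof (Rmin_r (Rmin c1 c2) (Rmin (Rmin d1 d2) t)).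
    assert (0 < Rmin (Rmin c1 c2) (Rmin (Rmin d1 d2) t)) by (repeat apply Rmin_pos; lra).
    lra. }
  assert (Rabs (s - 0) < c1) by (rewrite Rminus_0_r, Rabs_pos_eq; lra).
  assert (Rabs (s - 0) < c2) by (rewrite Rminus_0_r, Rabs_pos_eq; lra).
  specialize (hc1' s H). specialize (hc2' s H0). specialize (hd1' s ltac:(lra)). specialize (hd2' s ltac:(lra)).
  assert (hx : Rabs (f1 s - f2 s) < a).
  { apply Rabs_lt_inv in hc1'. apply Rabs_lt_inv in hc2'. apply Rabs_def1; lra. }
  assert (hy : Rabs ((Derive f1 s - Derive f2 s) - (n1 - n2)) < a).
  { apply Rabs_lt_inv in hd1'. apply Rabs_lt_inv in hd2'. apply Rabs_def1; lra. }
  pose proof (sq_close _ _ _ _ ha hx hy) as hsq.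
  destruct (gronwall f1 f2 s t o1 o2 ltac:(lra)) as [g _].
  assert (exp (20*(t-s)) <= E) by (unfold E; left; apply exp_increasing; lra).
  assert (0 <= En f1 f2 s) by (unfold En; pose proof (pow2_ge_0 (f1 s - f2 s)); pose proof (pow2_ge_0 (Derive f1 s - Derive f2 s)); lra).
  assert (En f1 f2 s * exp (20*(t-s)) <= En f1 f2 s * E) by (apply Rmult_le_compat_l; lra).
  fold (En f1 f2 s) in hsq.
  assert (hh : En f1 f2 s * E <= ((n1-n2)^2 + eps/E) * E) by (apply Rmult_le_compat_r; lra).
  replace (((n1-n2)^2 + eps/E) * E) with ((n1-n2)^2 * E + eps) in hh by (field; lra).
  lra.
Qed.

Lemma contn m (hm : m < -1) (V : R -> R -> R) (hV : forall n, is_solution m n (V n)) n t :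
  0 < t -> forall eps, 0 < eps -> exists d, 0 < d /\ forall n', Rabs (n' - n) < d ->
  Rabs (V n' t - V n t) < eps /\ Rabs (Derive (V n') t - Derive (V n) t) < eps.
Proof.
  intros ht eps he. exists (eps / exp (10*t)). split.
  { apply Rdiv_lt_0_compat; auto; apply exp_pos. }
  intros n' hn. pose proof (grow0 m n' n (V n') (V n) t hm (hV n') (hV n) ht) as g.
  assert (e20 : exp (20*t) = exp (10*t) * exp (10*t)) by (rewrite <- exp_plus; f_equal; ring).
  pose proof (exp_pos (10*t)).
  assert (Rabs (n' - n) * exp (10*t) < eps).
  { apply Rmult_lt_compat_r with (r := exp (10*t)) in hn; auto.
    replace (eps / exp (10 * t) * exp (10 * t)) with eps in hn by (field; lra). auto. }
  assert ((n'-n)^2 * exp (20*t) < eps^2).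
  { rewrite <- pow2_abs, e20. pose proof (Rabs_pos (n'-n)).
    replace (Rabs (n' - n) ^ 2 * (exp (10 * t) * exp (10 * t))) with ((Rabs (n' - n) * exp (10 * t))^2) by ring.
    assert (0 <= Rabs (n' - n) * exp (10 * t)) by (apply Rmult_le_pos; lra).
    set (z := Rabs (n' - n) * exp (10 * t)) in *. nra. }
  unfold En in g.
  split.
  - destruct (Rlt_dec (Rabs (V n' t - V n t)) eps); auto. exfalso.
    rewrite <- (pow2_abs (V n' t - V n t)) in g.
    assert (eps^2 <= Rabs (V n' t - V n t)^2) by (apply pow_incr; lra).
    pose proof (pow2_ge_0 (Derive (V n') t - Derive (V n) t)). lra.
  - destruct (Rlt_dec (Rabs (Derive (V n') t - Derive (V n) t)) eps); auto. exfalso.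
    rewrite <- (pow2_abs (Derive (V n') t - Derive (V n) t)) in g.
    assert (eps^2 <= Rabs (Derive (V n') t - Derive (V n) t)^2) by (apply pow_incr; lra).
    pose proof (pow2_ge_0 (V n' t - V n t)). lra.
Qed.

Lemma W_strict m n f : m < -1 -> is_solution m n f ->
  (forall t, 0 < t -> 0 <= Derive f t /\ f t <= -1) ->
  forall t, 0 < t -> 0 < Derive f t /\ f t < -1.
Proof.
  intros hm hs hW. pose proof (sol_ode _ _ _ hs) as o. pose proof hs as [hex [hder [h0 hn]]].
  assert (hlt : forall t, 0 < t -> f t < -1).
  { intros t0 ht0. destruct (hW t0 ht0) as [hD hf]. destruct hf as [|he]; auto. exfalso.
    assert (hD0 : Derive f t0 = 0).
    { destruct hD as [hp|]; auto. exfalso.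
      destruct (deriv_pos f t0 (Derive f t0) (Derive_correct _ _ (hex t0)) hp) as [d [hd hd']].
      specialize (hd' (d/2) ltac:(lra)) as [a1 _]. specialize (hW (t0 + d/2) ltac:(lra)). lra. }
    assert (hz : forall s, 0 < s <= t0 -> f s = -1).
    { intros s hs'. destruct (gronwall f (fun _ => -1) s t0 o const_ode hs') as [_ g].
      unfold En in g. rewrite !Derive_const, he, hD0 in g.
      replace ((-1 - -1)^2 + (0-0)^2) with 0 in g by ring. rewrite Rmult_0_l in g.
      pose proof (pow2_ge_0 (f s - -1)). pose proof (pow2_ge_0 (Derive f s - 0)).
      assert ((f s - -1)^2 = 0) by lra. nra. }
    destruct (cont_eps f 0 (hex 0) (-1-m) ltac:(lra)) as [d [hd hd']].
    set (s := Rmin d t0 / 2).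
    assert (0 < s <= t0 /\ s < d).
    { unfold s. pose proof (Rmin_l d t0). pose proof (Rmin_r d t0). assert (0 < Rmin d t0) by (apply Rmin_pos; lra). lra. }
    assert (Rabs (s - 0) < d) by (rewrite Rminus_0_r, Rabs_pos_eq; lra).
    specialize (hd' s H0). rewrite hz, h0 in hd' by lra. rewrite Rabs_pos_eq in hd'; lra. }
  intros t ht. split; auto. destruct (hW t ht) as [[hp|hz] _]; auto. exfalso.
  assert (hd : is_derive (fun s => - Derive f s) t (- (Rf (f t) - 3 * Derive f t))).
  { apply (is_derive_opp (Derive f)). apply hder; auto. }
  pose proof (Rf_bounds (f t)) as [_ [b _]]. specialize (b (hlt t ht)).
  destruct (deriv_pos _ _ _ hd ltac:(rewrite <- hz; lra)) as [d [hd0 hd']].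
  specialize (hd' (d/2) ltac:(lra)) as [a1 _]. specialize (hW (t + d/2) ltac:(lra)). lra.
Qed.

Lemma inv_N f t1 : odesol f -> 0 < t1 -> f t1 < -1 -> Derive f t1 < 0 ->
  forall t2, t1 <= t2 -> f t2 < -1.
Proof.
  intros [hex hder] ht1 hf hD t2 ht2. destruct (Req_dec t1 t2) as [<-|hne]; auto.
  destruct (Rlt_dec (f t2) (-1)) as [|hn]; auto. exfalso.
  destruct (first_hit f t1 t2 (-1) (ex_conte f hex) ltac:(lra) hf ltac:(lra)) as [tau [ht [hge hb]]].
  assert (hDs : forall s, t1 <= s < tau -> Derive f s < 0).
  { intros s hs.
    assert ((Derive f s + 0) * exp (3*s) <= (Derive f t1 + 0) * exp (3*t1)).
    { assert (-((Derive f t1 + 0) * exp (3*t1)) <= -((Derive f s + 0) * exp (3*s))); [|lra].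
      apply (mono_deriv (fun u => -((Derive f u + 0) * exp (3*u)))
        (fun c => -((Rf (f c) - 3 * Derive f c + 3*(Derive f c + 0))*exp(3*c)))); try lra.
      - intros c hc. apply (is_derive_opp (fun u => (Derive f u + 0) * exp (3*u))).
        apply hderiv. apply hder. lra.
      - intros c hc. cbv beta. pose proof (Rf_bounds (f c)) as [_ [b _]].
        specialize (b (hb c ltac:(lra))). pose proof (exp_pos (3*c)).
        replace (Rf (f c) - 3 * Derive f c + 3 * (Derive f c + 0)) with (Rf (f c)) by ring. nra. }
    pose proof (exp_pos (3*s)). pose proof (exp_pos (3*t1)). nra. }
  destruct (mvt f (Derive f) t1 tau) as [c [hc e]]; try lra.
  { intros c _. apply Derive_correct; auto. }
  specialize (hDs c ltac:(lra)). nra.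
Qed.

Lemma inv_P f t1 : odesol f -> 0 < t1 -> -1 < f t1 -> 0 < Derive f t1 ->
  forall t2, t1 <= t2 -> -1 < f t2.
Proof.
  intros [hex hder] ht1 hf hD t2 ht2. destruct (Req_dec t1 t2) as [<-|hne]; auto.
  destruct (Rlt_dec (-1) (f t2)) as [|hn]; auto. exfalso.
  assert (hc : conte (fun u => - f u)).
  { apply ex_conte. intro t. exists (- Derive f t). apply (is_derive_opp f). apply Derive_correct. auto. }
  destruct (first_hit (fun u => - f u) t1 t2 1 hc ltac:(lra) ltac:(lra) ltac:(lra)) as [tau [ht [hge hb]]].
  cbv beta in hge, hb.
  assert (hDs : forall s, t1 <= s < tau -> 0 < Derive f s).
  { intros s hs.
    assert ((Derive f t1 + 0) * exp (3*t1) <= (Derive f s + 0) * exp (3*s)).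
    { apply (mono_deriv (fun u => ((Derive f u + 0) * exp (3*u)))
        (fun c => ((Rf (f c) - 3 * Derive f c + 3*(Derive f c + 0))*exp(3*c)))); try lra.
      - intros c hc'. apply hderiv. apply hder. lra.
      - intros c hc'. cbv beta. pose proof (Rf_bounds (f c)) as [_ [_ [b _]]].
        specialize (hb c ltac:(lra)). specialize (b ltac:(lra)). pose proof (exp_pos (3*c)).
        replace (Rf (f c) - 3 * Derive f c + 3 * (Derive f c + 0)) with (Rf (f c)) by ring. nra. }
    pose proof (exp_pos (3*s)). pose proof (exp_pos (3*t1)). nra. }
  destruct (mvt f (Derive f) t1 tau) as [c [hc' e]]; try lra.
  { intros c _. apply Derive_correct; auto. }
  specialize (hDs c ltac:(lra)). nra.
Qed.

Lemma lowerD m n f : m < -1 -> is_solution m n f -> 0 < n ->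
  forall t, 0 < t -> n + 2/3 <= (Derive f t + 2/3) * exp (3*t).
Proof.
  intros hm hs hn t ht. pose proof hs as [hex [hder _]].
  apply Rle_plus_epsilon. intros eps he.
  destruct (D0 m n f hm hs (Rmin eps n) ltac:(apply Rmin_pos; lra)) as [d [hd hd']].
  set (s := Rmin d t / 2).
  assert (0 < s < t /\ s < d).
  { unfold s. pose proof (Rmin_l d t). pose proof (Rmin_r d t). assert (0 < Rmin d t) by (apply Rmin_pos; lra). lra. }
  specialize (hd' s ltac:(lra)). apply Rabs_lt_inv in hd'.
  pose proof (Rmin_l eps n). pose proof (Rmin_r eps n).
  assert ((Derive f s + 2/3) * exp (3*s) <= (Derive f t + 2/3) * exp (3*t)).
  { apply (mono_deriv (fun u => ((Derive f u + 2/3) * exp (3*u)))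
        (fun c => ((Rf (f c) - 3 * Derive f c + 3*(Derive f c + 2/3))*exp(3*c)))); try lra.
    - intros c hc'. apply hderiv. apply hder. lra.
    - intros c hc'. cbv beta. pose proof (Rf_bounds (f c)) as [b _]. pose proof (exp_pos (3*c)).
      replace (Rf (f c) - 3 * Derive f c + 3 * (Derive f c + 2/3)) with (Rf (f c) + 2) by field. nra. }
  assert (1 <= exp (3*s)) by (rewrite <- exp_0; left; apply exp_increasing; lra).
  nra.
Qed.

Lemma connect (S1 S2 : R -> Prop) a b : a < b -> S2 a -> S1 b ->
  (forall x, S1 x -> exists d, 0 < d /\ forall y, Rabs (y - x) < d -> S1 y) ->
  (forall x, S2 x -> exists d, 0 < d /\ forall y, Rabs (y - x) < d -> S2 y) ->
  (forall x, S1 x -> S2 x -> False) ->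
  exists x, ~ S1 x /\ ~ S2 x.
Proof.
  intros hab ha hb o1 o2 dj. apply NNPP. intro hn.
  assert (hall : forall x, S1 x \/ S2 x).
  { intro x. destruct (classic (S1 x)); auto. destruct (classic (S2 x)); auto. exfalso; apply hn; eauto. }
  set (E := fun x => a <= x <= b /\ S2 x).
  destruct (completeness E) as [tau [hub hl]].
  { exists b. intros x [hx _]. lra. }
  { exists a. split; auto; lra. }
  assert (hat : a <= tau) by (apply hub; split; auto; lra).
  assert (htb : tau <= b) by (apply hl; intros x [hx _]; lra).
  destruct (hall tau) as [h1|h2].
  - destruct (o1 tau h1) as [d [hd hd']].
    destruct (classic (exists x, E x /\ tau - d/2 < x)) as [[x [[hx1 hx2] hx3]]|hne].
    + assert (x <= tau) by (apply hub; split; auto).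
      apply (dj x); auto. apply hd'. apply Rabs_def1; lra.
    + assert (tau <= tau - d/2); [|lra].
      apply hl. intros x hx. destruct (Rle_dec x (tau - d/2)); auto. exfalso; apply hne; exists x; split; auto; lra.
  - destruct (o2 tau h2) as [d [hd hd']].
    assert (tau <> b) by (intro e; subst; apply (dj b); auto).
    set (x := Rmin (tau + d/2) b).
    assert (hx : tau < x <= tau + d/2 /\ x <= b).
    { unfold x. pose proof (Rmin_l (tau + d/2) b). pose proof (Rmin_r (tau + d/2) b).
      split; [split|]; try lra. apply Rmin_glb_lt; lra. }
    assert (E x).
    { split. { lra. }
      apply hd'. apply Rabs_def1; lra. }
    assert (x <= tau) by (apply hub; auto).
    unfold x in H1. revert H1. apply Rmin_case; lra.
Qed.

Theorem lemma4p3 (m : R) (hm : m < -1) (V : R -> R -> R)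
  (hV : forall n : R, is_solution m n (V n)) :
  (exists n, beta0 V n) /\ closed (beta0 V) /\
  (forall n, beta0 V n -> forall t, 0 < t -> V n t < -1).
Proof.
  assert (hWb : forall n, (forall t, 0 < t -> 0 <= Derive (V n) t /\ V n t <= -1) -> beta0 V n).
  { intros n hW t ht. destruct (W_strict m n (V n) hm (hV n) hW t ht). split; lra. }
  split; [|split].
  - set (S1 := fun n => exists t, 0 < t /\ -1 < V n t /\ 0 < Derive (V n) t).
    set (S2 := fun n => exists t, 0 < t /\ V n t < -1 /\ Derive (V n) t < 0).
    set (nb := (3 - m) * exp 3).
    assert (hnb : 0 < nb) by (unfold nb; pose proof (exp_pos 3); nra).
    destruct (connect S1 S2 (-1) nb) as [n [n1 n2]].
    + lra.
    +
      pose proof (hV (-1)) as hs. pose proof hs as [hex [_ [h0 _]]].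
      destruct (D0 m (-1) (V (-1)) hm hs 1 ltac:(lra)) as [d [hd hd']].
      destruct (cont_eps (V (-1)) 0 (hex 0) (-1-m) ltac:(lra)) as [d' [hd2 hd2']].
      set (s := Rmin d d' / 2).
      assert (0 < s /\ s < d /\ s < d').
      { unfold s. pose proof (Rmin_l d d'). pose proof (Rmin_r d d'). assert (0 < Rmin d d') by (apply Rmin_pos; lra). lra. }
      exists s. specialize (hd' s ltac:(lra)). apply Rabs_lt_inv in hd'.
      assert (Rabs (s - 0) < d') by (rewrite Rminus_0_r, Rabs_pos_eq; lra).
      specialize (hd2' s H0). apply Rabs_lt_inv in hd2'. rewrite h0 in hd2'. repeat split; lra.
    +
      pose proof (hV nb) as hs. pose proof hs as [hex [_ [h0 _]]].
      assert (hlow : forall t, 0 < t <= 1 -> 2 - m < Derive (V nb) t).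
      { intros t ht. pose proof (lowerD m nb (V nb) hm hs hnb t ltac:(lra)).
        pose proof (exp3c t ltac:(lra)) as [e1 e2].
        destruct (Rlt_dec (2 - m) (Derive (V nb) t)) as [|hn]; auto. exfalso.
        assert ((Derive (V nb) t + 2 / 3) * exp (3 * t) <= (3 - m) * exp (3*t)) by (apply Rmult_le_compat_r; lra).
        assert ((3 - m) * exp (3*t) <= nb) by (unfold nb; apply Rmult_le_compat_l; lra).
        lra. }
      exists 1. destruct (mvt (V nb) (Derive (V nb)) 0 1) as [c [hc e]]; try lra.
      { intros c _. apply Derive_correct; auto. }
      pose proof (hlow c ltac:(lra)). pose proof (hlow 1 ltac:(lra)). repeat split; nra.
    + intros x [t [ht [a1 a2]]].
      destruct (contn m hm V hV x t ht (Rmin (V x t + 1) (Derive (V x) t)) ltac:(apply Rmin_pos; lra)) as [d [hd hd']].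
      exists d. split; auto. intros y hy. specialize (hd' y hy) as [b1 b2].
      apply Rabs_lt_inv in b1. apply Rabs_lt_inv in b2.
      pose proof (Rmin_l (V x t + 1) (Derive (V x) t)). pose proof (Rmin_r (V x t + 1) (Derive (V x) t)).
      exists t. repeat split; lra.
    + intros x [t [ht [a1 a2]]].
      destruct (contn m hm V hV x t ht (Rmin (-1 - V x t) (- Derive (V x) t)) ltac:(apply Rmin_pos; lra)) as [d [hd hd']].
      exists d. split; auto. intros y hy. specialize (hd' y hy) as [b1 b2].
      apply Rabs_lt_inv in b1. apply Rabs_lt_inv in b2.
      pose proof (Rmin_l (-1 - V x t) (- Derive (V x) t)). pose proof (Rmin_r (-1 - V x t) (- Derive (V x) t)).
      exists t. repeat split; lra.
    + intros x [t1 [ht1 [a1 a2]]] [t2 [ht2 [b1 b2]]].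
      pose proof (sol_ode _ _ _ (hV x)) as o.
      destruct (Rle_dec t1 t2).
      * pose proof (inv_P _ t1 o ht1 a1 a2 t2 r). lra.
      * pose proof (inv_N _ t2 o ht2 b1 b2 t1 ltac:(lra)). lra.
    + exists n. apply hWb. pose proof (hV n) as hs. pose proof hs as [hex [_ [h0 _]]].
      assert (hle : forall t, 0 < t -> V n t <= -1).
      { intros t1 ht1. destruct (Rle_dec (V n t1) (-1)) as [|hgt]; auto. exfalso.
        destruct (last_cross (V n) 0 t1 (-1) (ex_conte _ hex) ht1 ltac:(lra) ltac:(lra)) as [tau [ht [h1 h2]]].
        destruct (mvt (V n) (Derive (V n)) tau t1) as [c [hc e]]; try lra.
        { intros c _. apply Derive_correct; auto. }
        assert (Derive (V n) c <= 0).
        { destruct (Rle_dec (Derive (V n) c) 0) as [|hp]; auto. exfalso. apply n1.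
          exists c. repeat split; try lra. apply h2; lra. }
        nra. }
      intros t ht. split; auto.
      destruct (Rle_dec 0 (Derive (V n) t)) as [|hneg]; auto. exfalso.
      destruct (hle t ht) as [hl|he].
      * apply n2. exists t. repeat split; lra.
      * assert (hd : is_derive (fun s => - V n s) t (- Derive (V n) t)).
        { apply (is_derive_opp (V n)). apply Derive_correct; auto. }
        destruct (deriv_pos _ _ _ hd ltac:(lra)) as [d [hd0 hd']].
        set (h := Rmin d t / 2).
        assert (0 < h < d /\ h < t).
        { unfold h. pose proof (Rmin_l d t). pose proof (Rmin_r d t). assert (0 < Rmin d t) by (apply Rmin_pos; lra). lra. }
        specialize (hd' h ltac:(lra)) as [_ a2]. cbv beta in a2.
        pose proof (hle (t - h) ltac:(lra)). lra.
  - intros n hn. apply hWb. intros t ht. split.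
    + destruct (Rle_dec 0 (Derive (V n) t)) as [|hneg]; auto. exfalso. apply hn.
      destruct (contn m hm V hV n t ht (- Derive (V n) t) ltac:(lra)) as [d [hd hd']].
      exists (mkposreal d hd). intros y hy hb. specialize (hd' y hy) as [_ b2].
      apply Rabs_lt_inv in b2. destruct (hb t ht). lra.
    + destruct (Rle_dec (V n t) (-1)) as [|hgt]; auto. exfalso. apply hn.
      destruct (contn m hm V hV n t ht (V n t + 1) ltac:(lra)) as [d [hd hd']].
      exists (mkposreal d hd). intros y hy hb. specialize (hd' y hy) as [b1 _].
      apply Rabs_lt_inv in b1. destruct (hb t ht). lra.
  - intros n hb t ht. assert (hW : forall t, 0 < t -> 0 <= Derive (V n) t /\ V n t <= -1).
    { intros s hs. destruct (hb s hs); split; lra. }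
    destruct (W_strict m n (V n) hm (hV n) hW t ht). auto.
Qed.
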